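(* Let $0<\lambda<1$, let $c>0$, and let $A \subseteq \mathbb{N}$. Suppose that $$\sum_{a \in A[x]} w(a) \sim \exp(c x^{1-\lambda}).$$ Then $$\liminf_{x \to \infty} \frac{\pi_A(x + x^\lambda) - \pi_A(x)}{x^\lambda/\log(x)} \ge \frac{1 - \exp[c(\lambda-1)]}{c(1-\lambda)}.$$
   Context: Fix $0<\lambda<1$. For $c>0$ and $x>0$, define $w(x) = \frac{c(1-\lambda)\log(x)\exp(c x^{1-\lambda})}{x^\lambda}$. Here $\mathbb{N} = \{1,2,3,\dots\}$. For $A \subseteq \mathbb{N}$ and $x\in\mathbb{R}$, write $A[x] = \{a \in A : a \le x\}$ and $\pi_A(x) = \# A[x]$. $f\sim g$ means $f(x)/g(x)\to 1$ as $x\to\infty$. *)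

(* Defs.v *)
From Stdlib Require Import Reals Lra ZArith List.
From Coquelicot Require Import Coquelicot.
Open Scope R_scope.

Definition w (lam c x : R) : R :=
  c * (1 - lam) * ln x * exp (c * Rpower x (1 - lam)) / Rpower x lam.

(* A subset A of N = {1,2,3,...} is given by its characteristic function on
   nat; only values at n >= 1 are ever consulted. *)

(* The indices 1, ..., N(x) where N(x) = Z.to_nat (up x) >= every a <= x. *)
Definition idx (x : R) : list nat := seq 1 (Z.to_nat (up x)).

(* sum_{a in A[x]} f(a),  A[x] = {a in A : a <= x} *)
Definition sum_upto (A : nat -> bool) (f : R -> R) (x : R) : R :=
  fold_right Rplus 0
    (map (fun n => if A n then (if Rle_dec (INR n) x then f (INR n) else 0) else 0)
         (idx x)).

Definition pi_A (A : nat -> bool) (x : R) : R := sum_upto A (fun _ => 1) x.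

Definition asymp (f g : R -> R) : Prop :=
  is_lim (fun x => f x / g x) p_infty 1.

Definition liminf_infty (f : R -> R) : Rbar :=
  Lub_Rbar (fun y => exists M : R, y = Glb_Rbar (fun z => exists x, M <= x /\ z = f x)).

(* Main.v *)
Require Import Defs.
From Stdlib Require Import Reals Lra Lia List ZArith.
From Coquelicot Require Import Coquelicot.
Open Scope R_scope.

Definition term (A : nat -> bool) (f : R -> R) (z : R) (n : nat) : R :=
  if A n then (if Rle_dec (INR n) z then f (INR n) else 0) else 0.

Lemma fold_zero (l : list nat) (F : nat -> R) :
  (forall n, In n l -> F n = 0) -> fold_right Rplus 0 (map F l) = 0.
Proof.
  induction l as [|a l IH]; simpl; intros H; [reflexivity|].
  rewrite H by auto. rewrite IH by auto. ring.
Qed.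

Lemma fold_nonneg (l : list nat) (F : nat -> R) :
  (forall n, In n l -> 0 <= F n) -> 0 <= fold_right Rplus 0 (map F l).
Proof.
  induction l as [|a l IH]; simpl; intros H; [lra|].
  specialize (H a (or_introl eq_refl)) as Ha.
  assert (0 <= fold_right Rplus 0 (map F l)) by (apply IH; auto). lra.
Qed.

Lemma fold_diff (l : list nat) (F1 F2 G1 G2 : nat -> R) (M : R) :
  (forall n, F1 n - F2 n <= M * (G1 n - G2 n)) ->
  fold_right Rplus 0 (map F1 l) - fold_right Rplus 0 (map F2 l)
  <= M * (fold_right Rplus 0 (map G1 l) - fold_right Rplus 0 (map G2 l)).
Proof.
  intros H; induction l as [|a l IH]; simpl; [lra|].
  specialize (H a). nra.
Qed.

Lemma up_pos (z : R) : 0 <= z -> (0 < up z)%Z.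
Proof.
  intros Hz. destruct (archimed z) as [H1 _]. apply lt_IZR. simpl. lra.
Qed.

Lemma INR_up (z : R) : 0 <= z -> INR (Z.to_nat (up z)) = IZR (up z).
Proof.
  intros Hz. rewrite INR_IZR_INZ. rewrite Z2Nat.id; [reflexivity|].
  pose proof (up_pos z Hz). lia.
Qed.

Lemma sum_ext (A : nat -> bool) (f : R -> R) (z : R) (K : nat) :
  0 <= z -> (Z.to_nat (up z) <= K)%nat ->
  sum_upto A f z = fold_right Rplus 0 (map (term A f z) (seq 1 K)).
Proof.
  intros Hz HK. unfold sum_upto, idx.
  set (N := Z.to_nat (up z)) in *.
  replace K with (N + (K - N))%nat by lia.
  rewrite seq_app, map_app, fold_right_app.
  rewrite (fold_zero (seq (1 + N) (K - N)) (term A f z)).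
  - reflexivity.
  - intros n Hn. apply in_seq in Hn.
    unfold term. destruct (A n); [|reflexivity].
    destruct (Rle_dec (INR n) z) as [Hle|]; [|reflexivity].
    exfalso. assert (HN: (1 + N <= n)%nat) by lia.
    apply le_INR in HN. rewrite plus_INR in HN. simpl in HN.
    unfold N in HN. rewrite INR_up in HN by lra.
    destruct (archimed z). lra.
Qed.

Lemma up_mono (x y : R) : x <= y -> (up x <= up y)%Z.
Proof.
  intros H. destruct (archimed x), (archimed y).
  assert (IZR (up x) < IZR (up y) + 1) by lra.
  rewrite <- plus_IZR in H4. apply lt_IZR in H4. lia.
Qed.

Lemma count_bound (A : nat -> bool) (f : R -> R) (x y M : R) :
  0 <= x -> x <= y ->
  (forall n : nat, x < INR n -> INR n <= y -> f (INR n) <= M) ->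
  sum_upto A f y - sum_upto A f x <= M * (pi_A A y - pi_A A x).
Proof.
  intros Hx Hxy Hf. unfold pi_A.
  set (K := Z.to_nat (up y)).
  assert (HKx : (Z.to_nat (up x) <= K)%nat).
  { unfold K. apply Z2Nat.inj_le; try (pose proof (up_pos x Hx); pose proof (up_pos y ltac:(lra)); lia).
    apply up_mono; auto. }
  rewrite (sum_ext A f y K), (sum_ext A f x K), (sum_ext A (fun _ => 1) y K),
    (sum_ext A (fun _ => 1) x K); try lra; try lia.
  apply fold_diff. intros n. unfold term.
  destruct (A n); [|lra].
  destruct (Rle_dec (INR n) y), (Rle_dec (INR n) x); try lra.
  assert (f (INR n) <= M) by (apply Hf; lra). lra.
Qed.

Lemma sum_nonneg (A : nat -> bool) (f : R -> R) (z : R) :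
  (forall n : nat, (1 <= n)%nat -> 0 <= f (INR n)) -> 0 <= sum_upto A f z.
Proof.
  intros Hf. unfold sum_upto. apply fold_nonneg. intros n Hn.
  unfold idx in Hn. apply in_seq in Hn.
  destruct (A n); [|lra]. destruct (Rle_dec (INR n) z); [|lra].
  apply Hf; lia.
Qed.
Lemma Rpower_pos (x a : R) : 0 < Rpower x a.
Proof. unfold Rpower. apply exp_pos. Qed.

Lemma exp_le_mono (a b : R) : a <= b -> exp a <= exp b.
Proof. intros [H|H]; [left; apply exp_increasing; auto | subst; lra]. Qed.

Lemma decomp (lam x : R) : 0 < x -> x + Rpower x lam = x * (1 + Rpower x (lam - 1)).
Proof.
  intros Hx. replace lam with (1 + (lam - 1)) at 1 by ring.
  rewrite Rpower_plus, Rpower_1 by auto. ring.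
Qed.

Lemma ln1p_lower (u : R) : 0 < u -> u / (1 + u) <= ln (1 + u).
Proof.
  intros Hu. pose proof (exp_ineq1_le (ln (/ (1 + u)))).
  rewrite exp_ln in H by (apply Rinv_0_lt_compat; lra).
  rewrite ln_Rinv in H by lra.
  assert (u / (1 + u) = 1 - / (1 + u)) by (field; lra). lra.
Qed.

Lemma diff_bound (lam x : R) : 0 < lam -> lam < 1 -> 0 < x ->
  (1 - lam) / (1 + Rpower x (lam - 1)) <=
  Rpower (x + Rpower x lam) (1 - lam) - Rpower x (1 - lam).
Proof.
  intros H0 H1 Hx. set (u := Rpower x (lam - 1)).
  assert (Hu : 0 < u) by apply Rpower_pos.
  rewrite decomp by auto. fold u.
  rewrite <- Rpower_mult_distr by lra.
  assert (Hxu : Rpower x (1 - lam) * u = 1).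
  { unfold u. rewrite <- Rpower_plus. replace (1 - lam + (lam - 1)) with 0 by ring.
    apply Rpower_O; auto. }
  assert (Hp : 1 + (1 - lam) * ln (1 + u) <= Rpower (1 + u) (1 - lam)).
  { unfold Rpower. apply exp_ineq1_le. }
  pose proof (ln1p_lower u Hu).
  set (X := Rpower x (1 - lam)) in *.
  assert (HX : 0 < X) by apply Rpower_pos.
  assert ((1 - lam) / (1 + u) = X * ((1 - lam) * (u / (1 + u)))).
  { transitivity ((X * u) * (1 - lam) / (1 + u)). { rewrite Hxu; field; lra. } field; lra. }
  rewrite H2.
  assert (X * ((1 - lam) * (u / (1 + u))) <= X * ((1 - lam) * ln (1 + u))).
  { apply Rmult_le_compat_l; [lra|]. apply Rmult_le_compat_l; lra. }
  assert (X * (Rpower (1 + u) (1 - lam) - 1) >= X * ((1 - lam) * ln (1 + u))).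
  { apply Rle_ge, Rmult_le_compat_l; lra. }
  nra.
Qed.

Lemma w_bound (lam c x y : R) (n : nat) : 0 < lam -> lam < 1 -> 0 < c -> 1 <= x ->
  x < INR n -> INR n <= y ->
  w lam c (INR n) <= c * (1 - lam) * ln y * exp (c * Rpower y (1 - lam)) / Rpower x lam.
Proof.
  intros H0 H1 Hc Hx Hn Hy. unfold w.
  set (t := INR n) in *.
  assert (Ht : 0 < t) by lra.
  assert (Hl1 : 0 <= ln t). { rewrite <- ln_1. apply ln_le; lra. }
  assert (Hl2 : ln t <= ln y) by (apply ln_le; lra).
  assert (He : exp (c * Rpower t (1 - lam)) <= exp (c * Rpower y (1 - lam))).
  { apply exp_le_mono. apply Rmult_le_compat_l; [lra|]. apply Rle_Rpower_l; lra. }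
  assert (Hp : Rpower x lam <= Rpower t lam) by (apply Rle_Rpower_l; lra).
  assert (Hpx : 0 < Rpower x lam) by apply Rpower_pos.
  assert (Hpt : 0 < Rpower t lam) by apply Rpower_pos.
  assert (HE : 0 < exp (c * Rpower t (1 - lam))) by apply exp_pos.
  unfold Rdiv. apply Rmult_le_compat.
  - assert (0 < c * (1 - lam)) by nra.
    apply Rmult_le_pos; [|lra]. apply Rmult_le_pos; lra.
  - left; apply Rinv_0_lt_compat; auto.
  - apply Rmult_le_compat; try lra.
    + assert (0 < c * (1 - lam)) by nra. apply Rmult_le_pos; lra.
    + apply Rmult_le_compat_l; [nra|]. auto.
  - apply Rinv_le_contravar; auto.
Qed.

Section Main.
Variables (lam c : R) (A : nat -> bool).
Hypotheses (H0 : 0 < lam) (H1 : lam < 1) (Hc : 0 < c).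

Definition E t := exp (c * Rpower t (1 - lam)).
Definition S t := sum_upto A (w lam c) t.
Definition Rf t := S t / E t.
Definition u x := Rpower x (lam - 1).
Definition q x := exp (- (c * (1 - lam)) * / (1 + u x)).
Definition gg x := (Rf (x + Rpower x lam) - Rf x * q x) * (ln x / ln (x + Rpower x lam)) / (c * (1 - lam)).
Definition ff x := (pi_A A (x + Rpower x lam) - pi_A A x) / (Rpower x lam / ln x).

Lemma pointwise x : 2 <= x -> gg x <= ff x.
Proof.
  intros Hx. unfold gg, ff.
  set (h := Rpower x lam).
  assert (Hh : 0 < h) by apply Rpower_pos.
  set (y := x + h).
  assert (Hlx : 0 < ln x). { rewrite <- ln_1. apply ln_increasing; lra. }
  assert (Hly : ln x < ln y). { apply ln_increasing; unfold y; lra. }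
  assert (HEx : 0 < E x) by apply exp_pos.
  assert (HEy : 0 < E y) by apply exp_pos.
  assert (HSx : 0 <= S x).
  { apply sum_nonneg. intros n Hn. apply le_INR in Hn. simpl in Hn.
    unfold w. assert (0 <= ln (INR n)) by (rewrite <- ln_1; apply ln_le; lra).
    pose proof (Rpower_pos (INR n) lam). pose proof (exp_pos (c * Rpower (INR n) (1 - lam))).
    unfold Rdiv. apply Rmult_le_pos; [|left; apply Rinv_0_lt_compat; auto].
    apply Rmult_le_pos; [|lra]. apply Rmult_le_pos; [|auto]. nra. }
  set (k := c * (1 - lam)).
  assert (Hk : 0 < k) by (unfold k; nra).
  set (M := k * ln y * E y / h).
  set (D := pi_A A y - pi_A A x).
  assert (Hcount : S y - S x <= M * D).
  { unfold S, D. apply count_bound; try lra. unfold y; lra.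
    intros n Hn1 Hn2. unfold M, k, E, h. apply w_bound; auto; lra. }
  assert (HQ : E x / E y <= q x).
  { unfold E, q. pose proof (diff_bound lam x H0 H1 ltac:(lra)). fold h y in H.
    replace (exp (c * Rpower x (1 - lam))) with
      (exp (c * Rpower x (1 - lam) - c * Rpower y (1 - lam)) * exp (c * Rpower y (1 - lam))).
    2:{ rewrite <- exp_plus. f_equal. ring. }
    field_simplify; [|apply Rgt_not_eq, exp_pos].
    apply exp_le_mono. unfold u. 
    assert (0 < 1 + Rpower x (lam - 1)) by (pose proof (Rpower_pos x (lam - 1)); lra).
    replace (- (c * (1 - lam)) * / (1 + Rpower x (lam - 1))) with
       (- (c * ((1 - lam) / (1 + Rpower x (lam - 1))))) by (field; lra).
    assert (c * ((1 - lam) / (1 + Rpower x (lam - 1))) <= c * (Rpower y (1 - lam) - Rpower x (1 - lam))).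
    { apply Rmult_le_compat_l; lra. }
    lra. }
  assert (HRx : 0 <= Rf x) by (unfold Rf; unfold Rdiv; apply Rmult_le_pos; [auto|left; apply Rinv_0_lt_compat; auto]).
  assert (Hstep : Rf x * q x >= S x / E y).
  { replace (S x / E y) with (Rf x * (E x / E y)) by (unfold Rf; field; lra).
    apply Rle_ge, Rmult_le_compat_l; auto. }
  set (r := ln x / ln y).
  assert (Hr : 0 < r) by (unfold r; apply Rdiv_lt_0_compat; lra).
  apply Rle_trans with ((S y - S x) * (ln x / (E y * ln y * k))).
  { replace ((S y - S x) * (ln x / (E y * ln y * k))) with ((Rf y - S x / E y) * r / k)
      by (unfold Rf, r; field; repeat split; lra).
    unfold Rdiv. apply Rmult_le_compat_r; [left; apply Rinv_0_lt_compat; auto|].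
    apply Rmult_le_compat_r; [lra|]. lra. }
  replace (D / (h / ln x)) with ((M * D) * (ln x / (E y * ln y * k)))
    by (unfold M; field; repeat split; lra).
  apply Rmult_le_compat_r; [|auto].
  left. apply Rdiv_lt_0_compat; auto. apply Rmult_lt_0_compat; [|auto]. apply Rmult_lt_0_compat; lra.
Qed.
End Main.

Lemma lim_cont_comp (f g : R -> R) (l : R) : is_lim g p_infty l -> continuous f l -> is_lim (fun x => f (g x)) p_infty (f l).
Proof. intros Hg Hf. eapply filterlim_comp; eauto. Qed.

Lemma Rbar_mult_neg_p a : a < 0 -> Rbar_mult (Finite a) p_infty = m_infty.
Proof. intros Ha. unfold Rbar_mult, Rbar_mult'. destruct (Rle_dec 0 a) as [H|H]; [exfalso; lra|]. reflexivity. Qed.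

Section Lims.
Variables (lam c : R) (A : nat -> bool).
Hypotheses (H0 : 0 < lam) (H1 : lam < 1) (Hc : 0 < c).
Hypothesis Has : is_lim (Rf lam c A) p_infty 1.

Lemma L2 : is_lim (fun x => x + Rpower x lam) p_infty p_infty.
Proof.
  apply is_lim_le_p_loc with (fun x => x); [|apply is_lim_id].
  exists 0. intros x _. pose proof (Rpower_pos x lam). lra.
Qed.

Lemma L3 : is_lim (fun x => Rf lam c A (x + Rpower x lam)) p_infty 1.
Proof.
  eapply is_lim_comp; [apply Has| apply L2|].
  exists 0. intros x _. discriminate.
Qed.

Lemma L4 : is_lim (u lam) p_infty 0.
Proof.
  unfold u, Rpower.
  eapply is_lim_comp; [apply is_lim_exp_m| |].
  - rewrite <- (Rbar_mult_neg_p (lam - 1)) by lra.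
    apply is_lim_scal_l. apply is_lim_ln_p.
  - exists 0. intros x _. discriminate.
Qed.

Lemma L5 : is_lim (q lam c) p_infty (exp (- (c * (1 - lam)) * / (1 + 0))).
Proof.
  unfold q. apply (lim_cont_comp exp (fun x => - (c * (1 - lam)) * / (1 + u lam x))).
  - apply (is_lim_scal_l (fun x => / (1 + u lam x)) (- (c * (1 - lam))) p_infty (/ (1 + 0))).
    apply (is_lim_inv (fun x => 1 + u lam x) p_infty (1 + 0)).
    + eapply is_lim_plus; [apply is_lim_const | apply L4 | reflexivity].
    + intros H. injection H. lra.
  - apply continuous_exp.
Qed.

Lemma L6 : is_lim (fun x => ln x / ln (x + Rpower x lam)) p_infty 1.
Proof.
  apply is_lim_ext_loc with (fun x => / (1 + ln (1 + u lam x) * / ln x)).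
  - exists 1. intros x Hx.
    rewrite decomp by lra. rewrite ln_mult by (try lra; pose proof (Rpower_pos x (lam - 1)); unfold u; lra).
    assert (0 < ln x) by (rewrite <- ln_1; apply ln_increasing; lra).
    assert (0 < ln (1 + u lam x)).
    { rewrite <- ln_1. apply ln_increasing; [lra|]. pose proof (Rpower_pos x (lam - 1)); unfold u; lra. }
    unfold u in *. field. lra.
  - replace (Finite 1) with (Rbar_inv (Finite (1 + ln (1 + 0) * 0))).
    2:{ simpl. rewrite Rplus_0_r, ln_1. f_equal. field. }
    apply is_lim_inv.
    + apply (is_lim_plus _ _ p_infty 1 (ln (1 + 0) * 0)); [apply is_lim_const| |reflexivity].
      replace (Finite (ln (1 + 0) * 0)) with (Rbar_mult (ln (1 + 0)) 0) by reflexivity.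
      apply (is_lim_mult _ _ p_infty (ln (1 + 0)) 0).
      * apply (lim_cont_comp ln (fun x => 1 + u lam x)).
        eapply is_lim_plus; [apply is_lim_const | apply L4 | reflexivity].
        apply continuous_ln. lra.
      * replace (Finite 0) with (Rbar_inv p_infty) by reflexivity.
        apply is_lim_inv; [apply is_lim_ln_p| discriminate].
      * simpl. exact I.
    + rewrite Rplus_0_r, ln_1, Rmult_0_l, Rplus_0_r. intros H. injection H. lra.
Qed.

Lemma Lg : is_lim (gg lam c A) p_infty ((1 - exp (c * (lam - 1))) / (c * (1 - lam))).
Proof.
  unfold gg.
  replace ((1 - exp (c * (lam - 1))) / (c * (1 - lam))) with
    ((1 - 1 * exp (- (c * (1 - lam)) * / (1 + 0))) * 1 * / (c * (1 - lam))).
  2:{ replace (- (c * (1 - lam)) * / (1 + 0)) with (c * (lam - 1)) by (field). field. nra. }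
  set (ex := exp (- (c * (1 - lam)) * / (1 + 0))).
  replace (Finite ((1 - 1 * ex) * 1 * / (c * (1 - lam)))) with (Rbar_mult ((1 - 1 * ex) * 1) (/ (c * (1 - lam)))) by reflexivity.
  apply (is_lim_mult _ (fun _ => / (c * (1 - lam))) p_infty); [| apply is_lim_const | exact I].
  replace (Finite ((1 - 1 * ex) * 1)) with (Rbar_mult (1 - 1 * ex) 1) by reflexivity.
  apply (is_lim_mult _ _ p_infty); [| apply L6 | exact I].
  apply (is_lim_minus _ _ p_infty 1 (1 * ex)); [apply L3 | | reflexivity].
  replace (Finite (1 * ex)) with (Rbar_mult 1 ex) by reflexivity.
  apply (is_lim_mult _ _ p_infty); [apply Has | apply L5 | exact I].
Qed.
End Lims.

Lemma liminf_eps (f : R -> R) (l : R) :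
  (forall eps, 0 < eps -> exists M, forall x, M <= x -> l - eps <= f x) ->
  Rbar_le l (liminf_infty f).
Proof.
  intros H.
  assert (Heps : forall eps, 0 < eps -> Rbar_le (l - eps) (liminf_infty f)).
  { intros eps He. destruct (H eps He) as [M HM].
    set (Z := fun z => exists x, M <= x /\ z = f x).
    assert (Hlow : Rbar_le (l - eps) (Glb_Rbar Z)).
    { destruct (Glb_Rbar_correct Z) as [_ Hg]. apply Hg.
      intros z [x [Hx ->]]. simpl. apply HM; auto. }
    assert (Hup : Rbar_le (Glb_Rbar Z) (f M)).
    { destruct (Glb_Rbar_correct Z) as [Hg _]. apply Hg. exists M. split; [lra|reflexivity]. }
    destruct (Glb_Rbar Z) as [gz| |] eqn:EG.
    - apply Rbar_le_trans with gz; [exact Hlow|].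
      unfold liminf_infty. destruct (Lub_Rbar_correct
        (fun y => exists M0 : R, y = Glb_Rbar (fun z => exists x, M0 <= x /\ z = f x))) as [Hu _].
      apply Hu. exists M. change (gz = real (Glb_Rbar Z)). rewrite EG. reflexivity.
    - simpl in Hup. contradiction.
    - simpl in Hlow. contradiction. }
  destruct (liminf_infty f) as [r| |] eqn:E.
  - simpl. destruct (Rle_dec l r) as [|Hn]; [auto|].
    exfalso. specialize (Heps ((l - r) / 2) ltac:(lra)). simpl in Heps. lra.
  - simpl. exact I.
  - specialize (Heps 1 ltac:(lra)). simpl in Heps. contradiction.
Qed.

Lemma liminf_ge (f g : R -> R) (l : R) : is_lim g p_infty l ->
  (exists X, forall x, X <= x -> g x <= f x) -> Rbar_le l (liminf_infty f).
Proof.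
  intros Hg [X HX]. apply liminf_eps. intros eps He.
  apply is_lim_spec in Hg. destruct (Hg (mkposreal eps He)) as [M0 HM0].
  exists (Rmax (M0 + 1) X). intros x Hx.
  pose proof (Rmax_l (M0 + 1) X). pose proof (Rmax_r (M0 + 1) X).
  specialize (HM0 x ltac:(lra)). simpl in HM0.
  specialize (HX x ltac:(lra)). apply Rabs_def2 in HM0. lra.
Qed.

Theorem mainTheorem5 (lam c : R) (A : nat -> bool) :
  0 < lam -> lam < 1 -> 0 < c ->
  asymp (fun x => sum_upto A (w lam c) x) (fun x => exp (c * Rpower x (1 - lam))) ->
  Rbar_le (Finite ((1 - exp (c * (lam - 1))) / (c * (1 - lam))))
    (liminf_infty (fun x => (pi_A A (x + Rpower x lam) - pi_A A x)
                             / (Rpower x lam / ln x))).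
Proof.
  intros H0 H1 Hc Has.
  apply (liminf_ge _ (gg lam c A)).
  - apply Lg; auto.
  - exists 2. intros x Hx. apply (pointwise lam c A H0 H1 Hc x Hx).
Qed.
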